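(* Let $G=(V,E,w)$ be a connected weighted graph with $n$ vertices. Then $$ n\sum_{e\in E} w_e B_e^{2}=R_{\mathrm{tot}}. $$
   Context: $G=(V,E,w)$ is an undirected graph with positive edge weights $w_e$ and Laplacian $L=D-A$ (weighted degree matrix minus weighted adjacency matrix); $L^{+}$ is its Moore–Penrose pseudoinverse, $L^{2+}=(L^+)^2$, and $1_v$ is the indicator vector of vertex $v$. The effective resistance is $R_{st}=(1_s-1_t)^{T}L^{+}(1_s-1_t)$ and the total resistance is $R_{\mathrm{tot}}=\sum_{\{s,t\}\subseteq V}R_{st}$, summed over unordered pairs of distinct vertices. The biharmonic distance is $B_{st}=\sqrt{(1_s-1_t)^{T}L^{2+}(1_s-1_t)}$, and $B_e:=B_{st}$ for an edge $e=\{s,t\}$. *)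

(* Defs.v *)
From HB Require Import structures.
From mathcomp Require Import all_boot all_order all_algebra.
Set Implicit Arguments. Unset Strict Implicit. Unset Printing Implicit Defensive.
Import Order.TTheory GRing.Theory Num.Theory.
Local Open Scope ring_scope.

(* A weighted undirected graph on vertex set 'I_n is given by a weight
   function w : 'I_n -> 'I_n -> R, symmetric, zero on the diagonal and
   nonnegative; {i,j} is an edge iff 0 < w i j (edges have positive weight). *)
Definition weighted_graph (R : realDomainType) (n : nat) (w : 'I_n -> 'I_n -> R) : Prop :=
  (forall i j, w i j = w j i) /\ (forall i, w i i = 0) /\ (forall i j, 0 <= w i j).

Definition adj (R : realDomainType) (n : nat) (w : 'I_n -> 'I_n -> R) : rel 'I_n :=
  fun i j => 0 < w i j.

Definition graph_connected (R : realDomainType) (n : nat) (w : 'I_n -> 'I_n -> R) : Prop :=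
  forall i j : 'I_n, connect (adj w) i j.

Definition laplacian (R : realDomainType) (n : nat) (w : 'I_n -> 'I_n -> R) : 'M[R]_n :=
  \matrix_(i, j) (if i == j then \sum_(k < n) w i k else - w i j).

(* X is the Moore–Penrose pseudoinverse of A (it exists and is unique). *)
Definition moore_penrose (R : realDomainType) (n : nat) (A X : 'M[R]_n) : Prop :=
  [/\ A *m X *m A = A, X *m A *m X = X, (A *m X)^T = A *m X & (X *m A)^T = X *m A].

Definition ind (R : realDomainType) (n : nat) (v : 'I_n) : 'cV[R]_n := delta_mx v 0.

Definition qform (R : realDomainType) (n : nat) (M : 'M[R]_n) (s t : 'I_n) : R :=
  ((ind R s - ind R t)^T *m M *m (ind R s - ind R t)) 0 0.

Definition eff_res (R : realDomainType) (n : nat) (Lp : 'M[R]_n) (s t : 'I_n) : R :=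
  qform Lp s t.

Definition total_res (R : realDomainType) (n : nat) (Lp : 'M[R]_n) : R :=
  \sum_(s < n) \sum_(t < n | (s < t)%N) eff_res Lp s t.

(* biharmonic distance, using L^{2+} = (L^+)^2 *)
Definition biharm (R : rcfType) (n : nat) (Lp : 'M[R]_n) (s t : 'I_n) : R :=
  Num.sqrt (qform (Lp *m Lp) s t).

(* Main.v *)
Require Import Defs.
From HB Require Import structures.
From mathcomp Require Import all_boot all_order all_algebra.
From mathcomp Require Import ring lra.
Import Order.TTheory GRing.Theory Num.Theory.
Local Open Scope ring_scope.

Lemma lap_sym (R : rcfType) n (w : 'I_n -> 'I_n -> R) :
  (forall i j, w i j = w j i) -> (laplacian w)^T = laplacian w.
Proof.
move=> ws; apply/matrixP=> i j; rewrite !mxE eq_sym.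
by case: eqP => [->|_] //; rewrite ws.
Qed.

Lemma mp_sym (R : rcfType) n (A X : 'M[R]_n) :
  A^T = A -> moore_penrose A X -> X^T = X.
Proof.
move=> hA [h1 h2 h3 h4].
have h3' : X^T *m A = A *m X by rewrite -[in LHS]hA -trmx_mul h3.
have h4' : A *m X^T = X *m A by rewrite -[in LHS]hA -trmx_mul h4.
have e1 : X = X *m X^T *m A by rewrite -mulmxA h3' mulmxA h2.
have e2 : X = X *m A *m X^T.
  transitivity (X *m X^T *m (A *m X *m A)); first by rewrite h1 -e1.
  transitivity (X *m (X^T *m A) *m (X *m A)); first by rewrite !mulmxA.
  by rewrite h3' -[in LHS]h4' !mulmxA h2.
by rewrite {1}e2 !trmx_mul trmxK hA mulmxA -e2.
Qed.

Lemma lap_row0 (R : rcfType) n (w : 'I_n -> 'I_n -> R) :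
  (forall i, w i i = 0) -> laplacian w *m (const_mx 1 : 'cV[R]_n) = 0.
Proof.
move=> w0; apply/matrixP=> i k; rewrite !mxE (bigD1 i) //= !mxE eqxx mulr1.
rewrite (bigD1 i) //= w0 add0r.
rewrite -big_split /= big1 // => j hj; rewrite !mxE mulr1 eq_sym (negbTE hj).
by rewrite addrN.
Qed.
Lemma qformE (R : realDomainType) n (M : 'M[R]_n) s t :
  qform M s t = M s s + M t t - M s t - M t s.
Proof.
have key a b : ((ind R a)^T *m M *m ind R b) 0 0 = M a b.
  by rewrite /ind trmx_delta -rowE -colE !mxE.
have sub (A B : 'M[R]_1) : (A - B) 0 0 = A 0 0 - B 0 0 by rewrite !mxE.
rewrite /qform.
have -> : (ind R s - ind R t)^T = (ind R s)^T - (ind R t)^T.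
  by apply/matrixP=> i j; rewrite !mxE.
rewrite !mulmxBl !mulmxBr !sub !key.
lra.
Qed.
Lemma sum_pairs (R : realDomainType) n (f : 'I_n -> 'I_n -> R) :
  (forall i j, f i j = f j i) -> (forall i, f i i = 0) ->
  \sum_(i : 'I_n) \sum_(j : 'I_n) f i j = 2%:R * \sum_(i : 'I_n) \sum_(j : 'I_n | (i < j)%N) f i j.
Proof.
move=> fs f0.
have -> : \sum_(i : 'I_n) \sum_(j : 'I_n) f i j = \sum_(i : 'I_n) \sum_(j : 'I_n | (i < j)%N) f i j + \sum_(i : 'I_n) \sum_(j : 'I_n | (j < i)%N) f i j.
  rewrite -big_split /=; apply: eq_bigr => i _.
  rewrite (bigID (fun j : 'I_n => (i < j)%N)) /=; congr (_ + _).
  rewrite (bigID (fun j : 'I_n => (j < i)%N)) /= [X in _ + X]big1 ?addr0.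
    by apply: eq_bigl => j; case: ltngtP.
  move=> j /andP[]; case: ltngtP => // h _ _.
  by have -> : j = i by apply: val_inj. 
rewrite [X in _ + X](exchange_big_dep xpredT) //= mulr_natl mulr2n; congr (_ + _).
by apply: eq_bigr => i _; apply: eq_bigr => j _; rewrite fs.
Qed.

Lemma Lp_row0 (R : rcfType) n (w : 'I_n -> 'I_n -> R) (Lp : 'M[R]_n) :
  weighted_graph w -> moore_penrose (laplacian w) Lp ->
  forall s, \sum_t Lp s t = 0.
Proof.
move=> [ws [w0 wp]] hmp s.
have hL := @lap_sym R n w ws.
have hs := @mp_sym R n _ _ hL hmp.
case: hmp => h1 h2 h3 h4.
have e : Lp = Lp *m Lp *m laplacian w.
  by rewrite -mulmxA -h4 trmx_mul hs hL mulmxA h2.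
have : (Lp *m (const_mx 1 : 'cV[R]_n)) = 0.
  by rewrite e -mulmxA lap_row0 // mulmx0.
move/matrixP/(_ s 0); rewrite !mxE => h; rewrite -[RHS]h.
by apply: eq_bigr => t _; rewrite mxE mulr1.
Qed.

Lemma qform_sq_ge0 (R : rcfType) n (Lp : 'M[R]_n) s t :
  Lp^T = Lp -> 0 <= qform (Lp *m Lp) s t.
Proof.
move=> hs; rewrite /qform.
set b := (ind R s - ind R t).
have -> : b^T *m (Lp *m Lp) *m b = (Lp *m b)^T *m (Lp *m b).
  by rewrite trmx_mul hs !mulmxA.
rewrite mxE; apply: sumr_ge0 => k _; rewrite mxE -expr2; exact: sqr_ge0.
Qed.

Lemma stepc (R : rcfType) n (w : 'I_n -> 'I_n -> R) (M : 'M[R]_n) :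
  (forall i j, w i j = w j i) -> (forall i, w i i = 0) ->
  \sum_i \sum_j w i j * (M i i + M j j - M i j - M j i)
  = 2%:R * \tr (laplacian w *m M).
Proof.
move=> ws w0.
have T2 : \sum_i \sum_j w i j * M j j = \sum_i \sum_j w i j * M i i.
  by rewrite exchange_big; apply: eq_bigr => i _; apply: eq_bigr => j _; rewrite ws.
have T4 : \sum_i \sum_j w i j * M j i = \sum_i \sum_j w i j * M i j.
  by rewrite exchange_big; apply: eq_bigr => i _; apply: eq_bigr => j _; rewrite ws.
have tr : \tr (laplacian w *m M) = \sum_i \sum_j w i j * M i i - \sum_i \sum_j w i j * M j i.
  rewrite /mxtrace -sumrB; apply: eq_bigr => i _.
  rewrite mxE -sumrB (bigD1 i) //= [in RHS](bigD1 i) //= !mxE eqxx w0 !mul0r subrr add0r.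
  rewrite (bigD1 i) //= w0 add0r mulr_suml -big_split /=.
  apply: eq_bigr => j hj; rewrite !mxE eq_sym (negbTE hj); ring.
have -> : \sum_i \sum_j w i j * (M i i + M j j - M i j - M j i) =
  \sum_i \sum_j w i j * M i i + \sum_i \sum_j w i j * M j j
  - \sum_i \sum_j w i j * M i j - \sum_i \sum_j w i j * M j i.
  transitivity (\sum_i \sum_j (w i j * M i i + w i j * M j j - w i j * M i j - w i j * M j i)).
    by apply: eq_bigr => i _; apply: eq_bigr => j _; ring.
  under eq_bigr => i _ do rewrite !sumrB big_split /=.
  by rewrite !sumrB big_split.
rewrite tr T2 T4; ring.
Qed.

Lemma trace_id (R : rcfType) n (L Lp : 'M[R]_n) :
  Lp *m L *m Lp = Lp -> \tr (L *m (Lp *m Lp)) = \tr Lp.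
Proof.
by move=> h; rewrite mulmxA mxtrace_mulC mulmxA h.
Qed.

Theorem corollary4p3 (R : rcfType) (n : nat) (w : 'I_n -> 'I_n -> R)
    (Lp : 'M[R]_n) :
  weighted_graph w -> graph_connected w ->
  moore_penrose (laplacian w) Lp ->
  n%:R * (\sum_(i < n) \sum_(j < n | (i < j)%N && (0 < w i j))
             w i j * biharm Lp i j ^+ 2)
  = total_res Lp.
Proof.
move=> wg _ hmp; have [ws [w0 wp]] := wg.
have hL := @lap_sym R n w ws.
have hs := @mp_sym R n _ _ hL hmp.
have h2 : Lp *m laplacian w *m Lp = Lp by case: hmp.
have two0 : (2%:R : R) != 0 by rewrite pnatr_eq0.
have eS : \sum_(i < n) \sum_(j < n | (i < j)%N && (0 < w i j))
             w i j * biharm Lp i j ^+ 2 = \tr Lp.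
  transitivity (\sum_(i < n) \sum_(j < n | (i < j)%N) w i j * qform (Lp *m Lp) i j).
    apply: eq_bigr => i _; rewrite big_mkcondr /=; apply: eq_bigr => j _.
    case: ifP => hw; first by rewrite /biharm sqr_sqrtr // qform_sq_ge0.
    have -> : w i j = 0 by apply/eqP; rewrite eq_le wp andbT leNgt hw.
    by rewrite mul0r.
  apply: (mulfI two0).
  rewrite -(@sum_pairs R n (fun i j => w i j * qform (Lp *m Lp) i j)); last first.
  - by move=> i; rewrite w0 mul0r.
  - by move=> i j; rewrite ws !qformE; ring.
  rewrite -(@trace_id R n (laplacian w) Lp h2) -stepc //.
  by apply: eq_bigr => i _; apply: eq_bigr => j _; rewrite qformE.
have eT : total_res Lp = n%:R * \tr Lp.
  apply: (mulfI two0).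
  rewrite /total_res /eff_res -(@sum_pairs R n (fun s t => qform Lp s t)); last first.
  - by move=> i; rewrite qformE; ring.
  - by move=> i j; rewrite !qformE; ring.
  transitivity (\sum_s \sum_t (Lp s s + Lp t t - Lp s t - Lp t s)).
    by apply: eq_bigr => i _; apply: eq_bigr => j _; rewrite qformE.
  under eq_bigr => i _ do rewrite !sumrB big_split /=.
  rewrite !sumrB big_split /=.
  have A1 : \sum_(s < n) \sum_(t < n) Lp s s = n%:R * \tr Lp.
    rewrite /mxtrace mulr_sumr; apply: eq_bigr => s _.
    by rewrite sumr_const card_ord mulr_natl.
  have A2 : \sum_(s < n) \sum_(t < n) Lp t t = n%:R * \tr Lp.
    by rewrite sumr_const card_ord mulr_natl.
  have A3 : \sum_(s < n) \sum_(t < n) Lp s t = 0.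
    by rewrite big1 // => s _; apply: (@Lp_row0 R n w).
  have A4 : \sum_(s < n) \sum_(t < n) Lp t s = 0 by rewrite exchange_big.
  rewrite A1 A2 A3 A4; ring.
by rewrite eS eT.
Qed.
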